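(* Let $n=2k$ with $k\ge 2$. If $lmd(S_n)=2$, then no local metric basis of $S_n$ has both of its vertices in the same cycle $C_i$, $i\in\{a,b,c,d\}$.
   Context: For $n\ge 3$, $S_n$ is the graph with vertex set $\{a_i,b_i,c_i,d_i : 1\le i\le n\}$ and edge set $\{a_ia_{i+1}, b_ib_{i+1}, c_ic_{i+1}, d_id_{i+1}, a_{i+1}b_i, a_ib_i, b_ic_i, c_id_i : 1\le i\le n\}$, indices taken modulo $n$. For $i\in\{a,b,c,d\}$, $C_i$ is the cycle induced by $i_1,\ldots,i_n$. A vertex $w$ resolves $u,v$ if $d(u,w)\neq d(v,w)$ ($d$ the graph distance). A local resolving set is a vertex set $W$ such that every two adjacent vertices are resolved by some element of $W$; a local metric basis is a local resolving set of minimum cardinality, and $lmd(G)$ is that cardinality. *)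

(* Defs.v *)
From mathcomp Require Import all_boot.
Set Implicit Arguments. Unset Strict Implicit. Unset Printing Implicit Defensive.

Section Graph.
Variables (T : finType) (e : rel T).

Fixpoint ball (u : T) (m : nat) : {set T} :=
  if m is m'.+1 then ball u m' :|: [set y | [exists x in ball u m', e x y]]
  else [set u].

(* graph distance: least m with v in ball u m (any finite distance is < #|T|;
   #|T| is returned for unreachable vertices, which does not occur for S_n) *)
Definition gdist (u v : T) : nat := find (fun m => v \in ball u m) (iota 0 #|T|).

Definition resolves (w u v : T) : bool := gdist u w != gdist v w.

Definition local_resolving (W : {set T}) : bool :=
  [forall u, forall v, e u v ==> [exists w in W, resolves w u v]].

(* local metric dimension: minimum cardinality of a local resolving set
   ([set: T] is always local resolving, so the arg min is well defined) *)
Definition lmd : nat :=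
  #|[arg min_(W < [set: T] | local_resolving W) #|W|]|.

Definition local_metric_basis (W : {set T}) : bool :=
  local_resolving W && (#|W| == lmd).

End Graph.

(* The graph S_n: vertex (l, i) with l : 'I_4 (0 = a, 1 = b, 2 = c, 3 = d), i : 'I_n
   (vertex l_{i+1} in the paper's 1-based indexing). *)
Definition Svert (n : nat) := ('I_4 * 'I_n)%type.

Definition S_edge0 (n : nat) (x y : Svert n) : bool :=
  [|| (x.1 == y.1) && (val y.2 == (val x.2 + 1) %% n)
    , [&& val x.1 == 0, val y.1 == 1 & val x.2 == (val y.2 + 1) %% n]
    , [&& val x.1 == 0, val y.1 == 1 & val x.2 == val y.2]
    , [&& val x.1 == 1, val y.1 == 2 & val x.2 == val y.2]
    | [&& val x.1 == 2, val y.1 == 3 & val x.2 == val y.2] ].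

Definition S_adj (n : nat) : rel (Svert n) := fun x y => S_edge0 x y || S_edge0 y x.

Definition Scycle (n : nat) (l : 'I_4) : {set Svert n} := [set x | x.1 == l].

(* Main.v *)
Require Import Defs.
From mathcomp Require Import all_boot zify.
Set Implicit Arguments. Unset Strict Implicit. Unset Printing Implicit Defensive.

Section Ball.
Variables (T : finType) (e : rel T) (c : T) (h : T -> nat).
Hypotheses (h0 : h c = 0) (hc : forall y, h y = 0 -> y = c)
  (hlip : forall x y, e x y -> h y <= (h x).+1)
  (hdesc : forall y, 0 < h y -> exists x, e x y /\ h x = (h y).-1).

Lemma ball_char m y : (y \in ball e c m) = (h y <= m).
Proof.
elim: m y => [|m IH] y /=.
- rewrite in_set1 leqn0; apply/eqP/eqP => [->//|]; exact: hc.
- rewrite in_setU in_set IH; apply/orP/idP.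
  + case=> [H|/existsP[x /andP[xb exy]]]; first exact: leqW.
    rewrite IH in xb; exact: leq_trans (hlip exy) _.
  + move=> hy; case: (leqP (h y) m) => [hm|hm]; first by left.
    right; have [x [exy hx]] := hdesc (leq_ltn_trans (leq0n m) hm).
    apply/existsP; exists x; rewrite exy andbT IH hx. lia.
Qed.

Lemma find_iota_ge d a N : a <= d < a + N -> find (fun m => d <= m) (iota a N) = d - a.
Proof.
elim: N a => [|N IH] a /=; first lia.
move=> hd; case: leqP => hh; first lia. rewrite IH; lia.
Qed.

Lemma gdist_char y : h y < #|T| -> gdist e c y = h y.
Proof.
move=> hy; rewrite /gdist.
have -> : find (fun m => y \in ball e c m) (iota 0 #|T|) = find (fun m => h y <= m) (iota 0 #|T|).
  by apply: eq_find => m; rewrite ball_char.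
rewrite find_iota_ge; lia.
Qed.
End Ball.

Section G.
Variable n : nat.
Hypothesis hn : 3 <= n.

Definition absd (X Y : nat) := (X - Y) + (Y - X).
Definition cd (X Y : nat) := minn (absd X Y) (2*n - absd X Y).

Lemma cd_tri X Y Z : X < 2*n -> Y < 2*n -> Z < 2*n -> cd X Z <= cd X Y + cd Y Z.
Proof. rewrite /cd /absd => *. lia. Qed.

Lemma cd_sym X Y : cd X Y = cd Y X.
Proof. rewrite /cd /absd. lia. Qed.

Lemma cd_par X Y : X < 2*n -> Y < 2*n -> (cd X Y + X + Y) %% 2 = 0.
Proof. rewrite /cd /absd => *. lia. Qed.

Lemma cd_le X Y : cd X Y <= n.
Proof. rewrite /cd /absd => *. lia. Qed.

Lemma cd0 X Y : X < 2*n -> Y < 2*n -> (cd X Y == 0) = (X == Y).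
Proof. rewrite /cd /absd => *. lia. Qed.

Definition posn (l i : nat) := 2*i + minn 1 l.
Definition Hn (l1 i1 l2 i2 : nat) := absd l1 l2 + cd (posn l1 i1) (posn l2 i2) %/ 2.

Definition e0P lx ix ly iy : Prop :=
  (lx = ly /\ (iy = ix + 1 \/ (ix + 1 = n /\ iy = 0))) \/
  (lx = 0 /\ ly = 1 /\ (ix = iy + 1 \/ (iy + 1 = n /\ ix = 0))) \/
  (lx = 0 /\ ly = 1 /\ ix = iy) \/
  (lx = 1 /\ ly = 2 /\ ix = iy) \/
  (lx = 2 /\ ly = 3 /\ ix = iy).
Definition eP lx ix ly iy := e0P lx ix ly iy \/ e0P ly iy lx ix.

Lemma posn_lt l i : i < n -> posn l i < 2 * n.
Proof. rewrite /posn; lia. Qed.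

Lemma edge_facts lx ix ly iy : ix < n -> iy < n -> eP lx ix ly iy ->
  (lx = ly /\ cd (posn lx ix) (posn ly iy) <= 2) \/
  ((lx = ly + 1 \/ ly = lx + 1) /\ cd (posn lx ix) (posn ly iy) <= 1 /\
    (lx = 0 \/ ly = 0 \/ posn lx ix = posn ly iy)).
Proof. rewrite /eP /e0P /cd /absd /posn => *. lia. Qed.

Lemma Hn_lip lc ic lx ix ly iy : ic < n -> ix < n -> iy < n ->
  eP lx ix ly iy -> Hn lc ic ly iy <= (Hn lc ic lx ix).+1.
Proof.
move=> hc hx hy he; rewrite /Hn.
have := edge_facts hx hy he.
have := cd_tri (posn_lt lc hc) (posn_lt lx hx) (posn_lt ly hy).
have := cd_par (posn_lt lc hc) (posn_lt lx hx).
have := cd_par (posn_lt lc hc) (posn_lt ly hy).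
move: (cd (posn lc ic) (posn ly iy)) (cd (posn lc ic) (posn lx ix)) (cd (posn lx ix) (posn ly iy)) => b a s.
rewrite /posn /absd. lia.
Qed.


Definition Sp (N X Y c : nat) := (X + c = Y \/ c + Y = N + X \/ Y + c = X \/ c + X = N + Y) /\ 2 * c <= N.
Ltac dl := repeat match goal with H : _ /\ _ |- _ => destruct H | H : _ \/ _ |- _ => destruct H end; lia.

Lemma cd_spec X Y : X < 2*n -> Y < 2*n -> Sp (2*n) X Y (cd X Y).
Proof. rewrite /Sp /cd /absd => *. lia. Qed.

Lemma circ1 C Y Y1 Y2 : C < 2*n -> Y < 2*n -> 0 < cd C Y ->
  ((Y1 = Y+1 /\ Y+1 < 2*n) \/ (Y+1 = 2*n /\ Y1 = 0)) -> (Y2 + 1 = Y \/ (Y = 0 /\ Y2 = 2*n - 1)) ->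
  cd C Y1 = cd C Y - 1 \/ cd C Y2 = cd C Y - 1.
Proof.
move=> hC hY h0 e1 e2.
have hY1 : Y1 < 2*n by lia. have hY2 : Y2 < 2*n by lia.
have := cd_spec hC hY; have := cd_spec hC hY1; have := cd_spec hC hY2.
rewrite /Sp; move: (cd C Y) (cd C Y1) (cd C Y2) h0 => a b c *. dl.
Qed.

Lemma circ2 C Y Y1 Y2 : C < 2*n -> Y < 2*n -> 2 <= cd C Y ->
  ((Y1 = Y+2 /\ Y+2 < 2*n) \/ (2*n <= Y+2 /\ Y1 = Y + 2 - 2*n)) -> (Y2 + 2 = Y \/ (Y < 2 /\ Y2 = Y + 2*n - 2)) ->
  cd C Y1 = cd C Y - 2 \/ cd C Y2 = cd C Y - 2.
Proof.
move=> hC hY h0 e1 e2.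
have hY1 : Y1 < 2*n by lia. have hY2 : Y2 < 2*n by lia.
have := cd_spec hC hY; have := cd_spec hC hY1; have := cd_spec hC hY2.
rewrite /Sp; move: (cd C Y) (cd C Y1) (cd C Y2) h0 => a b c *. dl.
Qed.

Definition sc i := if i.+1 == n then 0 else i.+1.
Definition pr i := if i == 0 then n.-1 else i.-1.
Lemma sc_spec i : i < n -> sc i < n /\ (sc i = i+1 \/ (i+1 = n /\ sc i = 0)).
Proof. rewrite /sc; case: ifP => /eqP; lia. Qed.
Lemma pr_spec i : i < n -> pr i < n /\ (pr i + 1 = i \/ (i = 0 /\ pr i = n - 1)).
Proof. rewrite /pr; case: ifP => /eqP; lia. Qed.

Lemma Hn_desc lc ic ly iy : lc < 4 -> ly < 4 -> ic < n -> iy < n -> (lc != ly) || (ic != iy) ->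
  exists lx ix, [/\ lx < 4, ix < n, eP lx ix ly iy & Hn lc ic lx ix = (Hn lc ic ly iy).-1].
Proof.
move=> hlc hly hic hiy hne.
have hC := posn_lt lc hic; have hY := posn_lt ly hiy.
have par := cd_par hC hY.
have c0 : cd (posn lc ic) (posn ly iy) = 0 -> posn lc ic = posn ly iy.
  by move/eqP; rewrite cd0 // => /eqP.
have [ssy ssp] := sc_spec hiy; have [ppy ppp] := pr_spec hiy.
rewrite /Hn.
have [lt|gt|eq] := ltngtP ly lc.
- case: (posnP ly) => [ly0|lyp].
  + subst ly.
    have p0 : 0 < cd (posn lc ic) (posn 0 iy) by move: par; set D := cd _ _; rewrite /posn; clear -lt; lia.
    have p1 : (posn 1 iy = posn 0 iy + 1 /\ posn 0 iy + 1 < 2 * n) \/ (posn 0 iy + 1 = 2 * n /\ posn 1 iy = 0).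
      by rewrite /posn; clear -hiy; lia.
    have p2 : (posn 1 (pr iy) + 1 = posn 0 iy) \/ (posn 0 iy = 0 /\ posn 1 (pr iy) = 2 * n - 1).
      by rewrite /posn; clear -ppp ppy hiy; lia.
    have [h1|h2] := circ1 hC hY p0 p1 p2.
    * exists 1, iy; split => //; first by rewrite /eP /e0P; right; right; right; left.
      move: par h1; rewrite /posn /absd => par h1; clear -h1 par lt hlc; lia.
    * exists 1, (pr iy); split => //; first by rewrite /eP /e0P; right; right; left; split; first done; split; first done; clear -ppp hn; lia.
      move: par h2; rewrite /posn /absd => par h2; clear -h2 par lt hlc; lia.
  + exists ly.+1, iy.
    have -> : posn ly.+1 iy = posn ly iy by rewrite /posn; clear -lyp; lia.
    split; [clear -lt hlc; lia|done|rewrite /eP /e0P; right; right; right; right; clear -lt hlc lyp; lia|rewrite /absd; clear -lt; lia].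
- case: (ltnP 1 ly) => [ly2|ly1].
  + exists ly.-1, iy.
    have -> : posn ly.-1 iy = posn ly iy by rewrite /posn; clear -ly2; lia.
    split; [clear -hly; lia|done| |rewrite /absd; clear -gt ly2; lia].
    have : ly = 2 \/ ly = 3 by clear -hly ly2; lia.
    by case=> ->; rewrite /eP /e0P /=; left; clear; lia.
  + have ly1' : ly = 1 by clear -gt ly1; lia.
    have lc0 : lc = 0 by clear -gt ly1; lia.
    subst ly lc.
    have p0 : 0 < cd (posn 0 ic) (posn 1 iy) by move: par; set D := cd _ _; rewrite /posn; clear; lia.
    have p1 : (posn 0 (sc iy) = posn 1 iy + 1 /\ posn 1 iy + 1 < 2 * n) \/ (posn 1 iy + 1 = 2 * n /\ posn 0 (sc iy) = 0).
      by rewrite /posn; clear -ssp ssy hiy; lia.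
    have p2 : (posn 0 iy + 1 = posn 1 iy) \/ (posn 1 iy = 0 /\ posn 0 iy = 2 * n - 1).
      by rewrite /posn; clear; lia.
    have [h1|h2] := circ1 hC hY p0 p1 p2.
    * exists 0, (sc iy); split => //; first by rewrite /eP /e0P; left; right; left; split; first done; split; first done; exact: ssp.
      move: par h1; rewrite /posn /absd => par h1; clear -h1 par; lia.
    * exists 0, iy; split => //; first by rewrite /eP /e0P; left; right; right; left.
      move: par h2; rewrite /posn /absd => par h2; clear -h2 par; lia.
- subst ly.
  have p0 : 2 <= cd (posn lc ic) (posn lc iy).
    move: par c0; set D := cd _ _; rewrite /posn; move: hne; clear; lia.
  have p1 : (posn lc (sc iy) = posn lc iy + 2 /\ posn lc iy + 2 < 2 * n) \/ (2 * n <= posn lc iy + 2 /\ posn lc (sc iy) = posn lc iy + 2 - 2 * n).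
    by rewrite /posn; clear -ssp ssy hiy; lia.
  have p2 : (posn lc (pr iy) + 2 = posn lc iy) \/ (posn lc iy < 2 /\ posn lc (pr iy) = posn lc iy + 2 * n - 2).
    by rewrite /posn; clear -ppp ppy hiy; lia.
  have [h1|h2] := circ2 hC hY p0 p1 p2.
  * exists lc, (sc iy); split => //; first by rewrite /eP /e0P; right; left; split.
    move: par h1; rewrite /posn /absd => par h1; clear -h1 par; lia.
  * exists lc, (pr iy); split => //; first by rewrite /eP /e0P; left; left; split; first done; clear -ppp hn; lia.
    move: par h2; rewrite /posn /absd => par h2; clear -h2 par; lia.
Qed.

Lemma modS i : i < n -> (i + 1) %% n = if i + 1 == n then 0 else i + 1.
Proof. move=> h; case: ifP => /eqP e; first by rewrite e modnn. rewrite modn_small //; lia. Qed.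

Lemma S_adjP (x y : Svert n) :
  S_adj x y <-> eP (val x.1) (val x.2) (val y.1) (val y.2).
Proof.
have hx2 : val x.2 < n := ltn_ord x.2. have hy2 : val y.2 < n := ltn_ord y.2.
rewrite /S_adj /S_edge0 -[x.1 == y.1]val_eqE -[y.1 == x.1]val_eqE !modS //.
clear hx2 hy2.
have hlx : val x.1 < 4 := ltn_ord x.1. have hix : val x.2 < n := ltn_ord x.2.
have hly : val y.1 < 4 := ltn_ord y.1. have hiy : val y.2 < n := ltn_ord y.2.
move: hlx hix hly hiy.
move: (val x.1) (val x.2) (val y.1) (val y.2) => lx ix ly iy hlx hix hly hiy.
rewrite /eP /e0P.
have : lx = 0 \/ lx = 1 \/ lx = 2 \/ lx = 3 by lia.
have : ly = 0 \/ ly = 1 \/ ly = 2 \/ ly = 3 by lia.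
clear hlx hly.
case=> [->|[->|[->|->]]]; case=> [->|[->|[->|->]]] /=;
  repeat (case: ifP => /eqP ?); split => H; lia.
Qed.

Definition HS (u v : Svert n) := Hn (val u.1) (val u.2) (val v.1) (val v.2).

Lemma ltv (m : nat) (i : 'I_m) : val i < m. Proof. exact: ltn_ord. Qed.

Lemma Hn_self l i : i < n -> Hn l i l i = 0.
Proof.
move=> hi; rewrite /Hn /absd. have := cd_spec (posn_lt l hi) (posn_lt l hi).
rewrite /Sp; move: (cd _ _) => D. lia.
Qed.

Lemma Hn_zero l1 i1 l2 i2 : i1 < n -> i2 < n -> Hn l1 i1 l2 i2 = 0 -> l1 = l2 /\ i1 = i2.
Proof.
move=> h1 h2; rewrite /Hn.
have hC := posn_lt l1 h1; have hZ := posn_lt l2 h2.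
have := cd_par hC hZ.
have : cd (posn l1 i1) (posn l2 i2) = 0 -> posn l1 i1 = posn l2 i2.
  by move/eqP; rewrite cd0 // => /eqP.
move: (cd _ _) => D; rewrite /posn /absd => *. lia.
Qed.

Lemma Hn_lt l1 i1 l2 i2 : l1 < 4 -> l2 < 4 -> Hn l1 i1 l2 i2 < 4 * n.
Proof.
rewrite /Hn; have := cd_le (posn l1 i1) (posn l2 i2).
move: (cd _ _) => D; rewrite /absd => *; lia.
Qed.

Lemma HS_gdist (c y : Svert n) : gdist (@S_adj n) c y = HS c y.
Proof.
apply: (gdist_char (h := HS c)).
- exact: Hn_self (ltv _).
- move=> z hz; have [e1 e2] := Hn_zero (ltv c.2) (ltv z.2) hz.
  by case: c z e1 e2 {hz} => [c1 c2] [z1 z2] /= /val_inj -> /val_inj ->.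
- move=> u v /S_adjP huv; rewrite /HS; apply: Hn_lip => //; exact: ltv.
- move=> z hz.
  have hne : (val c.1 != val z.1) || (val c.2 != val z.2).
    apply: contraTT hz; rewrite negb_or !negbK => /andP[/eqP e1 /eqP e2].
    by rewrite /HS e1 e2 Hn_self // ltv.
  have [lx [ix [hlx hix he hH]]] := Hn_desc (ltv c.1) (ltv z.1) (ltv c.2) (ltv z.2) hne.
  exists (Ordinal hlx, Ordinal hix); split; last by rewrite /HS hH.
  by apply/S_adjP.
- rewrite card_prod !card_ord /HS; apply: Hn_lt; exact: ltv.
Qed.

Lemma eq_help lu iu lv iv l p : iu < n -> iv < n -> p < n ->
 (forall D1 D2, Sp (2*n) (posn lu iu) (posn l p) D1 -> Sp (2*n) (posn lv iv) (posn l p) D2 ->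
    absd lu l + D1 %/ 2 = absd lv l + D2 %/ 2) ->
 Hn lu iu l p = Hn lv iv l p.
Proof. move=> hu hv hp H; apply: H; exact: cd_spec (posn_lt _ _) (posn_lt _ _). Qed.

Lemma key k l p q : n = 2 * k -> l < 4 -> p < q -> q < n ->
  exists lu iu lv iv, [/\ lu < 4, iu < n, lv < 4 & iv < n] /\
    [/\ eP lu iu lv iv, Hn lu iu l p = Hn lv iv l p & Hn lu iu l q = Hn lv iv l q].
Proof.
move=> hk hl hpq hq.
have hp : p < n by lia.
have [ssy ssp] := sc_spec hp; have [ppy ppp] := pr_spec hp.
case: (posnP l) => [l0|lpos].
- subst l.
  have [r1|r2|r3] := ltngtP (2 * (q - p)) n.
  + exists 1, (pr p), 0, (pr p); split; first by split.
  split.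
    * by rewrite /eP /e0P; right; right; right; left.
    * apply: eq_help => // D1 D2; rewrite /Sp /posn /absd; clear -ppp ppy hp hn hk; lia.
    * apply: eq_help => // D1 D2; rewrite /Sp /posn /absd; clear -ppp ppy hp hq hpq r1 hn hk; lia.
  + exists 1, p, 0, (sc p); split; first by split.
  split.
    * by rewrite /eP /e0P; right; right; left; split; first done; split; first done; exact: ssp.
    * apply: eq_help => // D1 D2; rewrite /Sp /posn /absd; clear -ssp ssy hp hn hk; lia.
    * apply: eq_help => // D1 D2; rewrite /Sp /posn /absd; clear -ssp ssy hp hq hpq r2 hn hk; lia.
  + exists 1, (pr p), 1, p; split; first by split.
  split.
    * by rewrite /eP /e0P; left; left; split; first done; clear -ppp hn hk; lia.
    * apply: eq_help => // D1 D2; rewrite /Sp /posn /absd; clear -ppp ppy hp hn hk; lia.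
    * apply: eq_help => // D1 D2; rewrite /Sp /posn /absd; clear -ppp ppy hp hq hpq r3 hn hk; lia.
- have [r1|r2|r3] := ltngtP (2 * (q - p)) n.
  + exists 0, p, 1, (pr p); split; first by split.
  split.
    * by rewrite /eP /e0P; left; right; left; split; first done; split; first done; clear -ppp hn hk; lia.
    * apply: eq_help => // D1 D2; rewrite /Sp /posn /absd; clear -ppp ppy hp hn hk lpos hl; lia.
    * apply: eq_help => // D1 D2; rewrite /Sp /posn /absd; clear -ppp ppy hp hq hpq r1 hn hk lpos hl; lia.
  + exists 0, (sc p), 1, (sc p); split; first by split.
  split.
    * by rewrite /eP /e0P; left; right; right; left.
    * apply: eq_help => // D1 D2; rewrite /Sp /posn /absd; clear -ssp ssy hp hn hk lpos hl; lia.
    * apply: eq_help => // D1 D2; rewrite /Sp /posn /absd; clear -ssp ssy hp hq hpq r2 hn hk lpos hl; lia.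
  + exists 0, p, 0, (sc p); split; first by split.
  split.
    * by rewrite /eP /e0P; left; left; split; first done; exact: ssp.
    * apply: eq_help => // D1 D2; rewrite /Sp /posn /absd; clear -ssp ssy hp hn hk lpos hl; lia.
    * apply: eq_help => // D1 D2; rewrite /Sp /posn /absd; clear -ssp ssy hp hq hpq r3 hn hk lpos hl; lia.
Qed.
End G.

Theorem lemma3p3 (k : nat) (hk : 2 <= k) :
  lmd (@S_adj (2 * k)) = 2 ->
  forall W : {set Svert (2 * k)}, local_metric_basis (@S_adj (2 * k)) W ->
  ~ (exists l : 'I_4, W \subset Scycle (2 * k) l).
Proof.
move=> Hlmd W /andP[Hres Hcard] [l Wsub].
have hn : 3 <= 2 * k by lia.
rewrite Hlmd in Hcard.
have [w1 [w2 [hne HW]]] := cards2P _ Hcard.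
have l1 : w1.1 = l by have := subsetP Wsub w1; rewrite HW !inE eqxx => /(_ isT) /eqP.
have l2 : w2.1 = l by have := subsetP Wsub w2; rewrite HW !inE eqxx orbT => /(_ isT) /eqP.
wlog hlt : w1 w2 hne HW l1 l2 / val w1.2 < val w2.2.
  move=> H; case: (ltngtP (val w1.2) (val w2.2)) => h.
  - exact: (H w1 w2).
  - apply: (H w2 w1) => //; first by rewrite eq_sym. by rewrite HW setUC.
  - move: hne; suff -> : w1 = w2 by rewrite eqxx.
    by case: w1 w2 l1 l2 h {H HW} => [a1 b1] [a2 b2] /= -> -> /val_inj ->.
have [lu [iu [lv [iv [[hlu hiu hlv hiv] [he e1 e2]]]]]] :=
  key hn (erefl (2 * k)) (ltv l) hlt (ltv w2.2).
pose u : Svert (2 * k) := (Ordinal hlu, Ordinal hiu).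
pose v : Svert (2 * k) := (Ordinal hlv, Ordinal hiv).
have huv : S_adj u v by apply/S_adjP.
move/forallP/(_ u)/forallP/(_ v): Hres; rewrite huv /= => /existsP[w /andP[]].
rewrite HW !inE /resolves !(HS_gdist hn) /HS /= => /orP[] /eqP ->.
- by rewrite l1 e1 eqxx.
- by rewrite l2 e2 eqxx.
Qed.
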